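(* Let $d$ be an integer and $x>0$ a real number with $0\leqslant d-1\leqslant x/2$. Then $$\sum_{K_{d-1}-d+1<k\leqslant K_{d-1}}\Big(d^2\lfloor x/k\rfloor+\frac{2dx}{\lfloor x/k\rfloor}-x^2F(x/k)\Big)=\frac{8d^2-4d-1}{3}\sqrt{(d-1)x}+O(d^{7/2}x^{-1/2})+O(d^2),$$ where $k$ runs over integers, with absolute implied constants.
   Context: $\lfloor\cdot\rfloor$ denotes the integer part. For an integer $d\geqslant 0$ and real $x>0$, $K_d=K_d(x)=\big\lfloor \big(d+\sqrt{d^2+4dx}\,\big)/2\big\rfloor$. For real $t$, $F(t)=\sum_{n>t-1}\frac{1}{n^2(n+1)^2}$, summed over positive integers $n>t-1$. *)

(* Defs.v *)
From Stdlib Require Import Reals ZArith List.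
From Coquelicot Require Import Coquelicot.
Open Scope R_scope.

(* integer part: Int_part r = up r - 1 is the floor of r *)
Definition ifloor (r : R) : Z := Int_part r.

Definition Kd (d : Z) (x : R) : Z :=
  ifloor ((IZR d + sqrt (IZR d ^ 2 + 4 * IZR d * x)) / 2).

Definition F (t : R) : R :=
  Series (fun n : nat =>
    if Rlt_dec 0 (INR n) then
      if Rlt_dec (t - 1) (INR n) then / (INR n ^ 2 * (INR n + 1) ^ 2) else 0
    else 0).

(* sum of f k over integers k with a < k <= b (empty if b <= a) *)
Definition zsum (a b : Z) (f : Z -> R) : R :=
  fold_right Rplus 0
    (map (fun j : nat => f (a + 1 + Z.of_nat j)%Z) (seq 0 (Z.to_nat (b - a)))).

Definition summand (d : Z) (x : R) (k : Z) : R :=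
  let q := IZR (ifloor (x / IZR k)) in
  IZR d ^ 2 * q + 2 * IZR d * x / q - x ^ 2 * F (x / IZR k).

Definition Ssum (d : Z) (x : R) : R :=
  zsum (Kd (d - 1) x - d + 1)%Z (Kd (d - 1) x) (summand d x).

(* Main.v *)
Require Import Defs.
From Stdlib Require Import Reals Lra Lia Arith ZArith List.
From Coquelicot Require Import Coquelicot.
Open Scope R_scope.

Lemma tele_partial (h : nat -> R) (n0 M : nat) :
  sum_n (fun n => if le_dec n0 n then h n - h (S n) else 0) M =
  if le_dec n0 M then h n0 - h (S M) else 0.
Proof.
  induction M as [|M IH].
  - rewrite sum_O. destruct (le_dec n0 0); [|reflexivity].
    assert (n0 = 0%nat) by lia. subst. reflexivity.
  - rewrite sum_Sn, IH. unfold plus; simpl.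
    destruct (le_dec n0 M), (le_dec n0 (S M)); try lia.
    + lra.
    + assert (n0 = S M) by lia. subst. lra.
    + lra.
Qed.

Lemma tele_series (h : nat -> R) (n0 : nat) :
  is_lim_seq h 0 ->
  is_series (fun n => if le_dec n0 n then h n - h (S n) else 0) (h n0).
Proof.
  intros Hh.
  assert (H : is_lim_seq (sum_n (fun n => if le_dec n0 n then h n - h (S n) else 0)) (h n0)).
  2:{ exact H. }
  apply (is_lim_seq_ext_loc (fun M => h n0 - h (S M))).
  - exists n0. intros M HM. rewrite tele_partial. destruct (le_dec n0 M); [reflexivity|lia].
  - replace (Finite (h n0)) with (Rbar_minus (h n0) 0) by (simpl; f_equal; ring).
    apply is_lim_seq_minus'. apply is_lim_seq_const.
    apply (is_lim_seq_incr_1 h 0). exact Hh.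
Qed.

Lemma lim_invpow (c : R) (p : nat) : 0 < c -> (1 <= p)%nat ->
  is_lim_seq (fun n => / (c * INR n ^ p)) 0.
Proof.
  intros Hc Hp.
  replace (Finite 0) with (Rbar_inv p_infty) by reflexivity.
  apply is_lim_seq_inv; [|discriminate].
  apply (is_lim_seq_le_p_loc (fun n => c * INR n)).
  - exists 1%nat. intros n Hn. apply Rmult_le_compat_l; [lra|].
    assert (1 <= INR n) by (apply (le_INR 1); lia).
    destruct p as [|p]; [lia|]. simpl.
    rewrite <- (Rmult_1_r (INR n)) at 1. apply Rmult_le_compat_l; [lra|].
    apply pow_R1_Rle. lra.
  - replace p_infty with (Rbar_mult c p_infty).
    apply is_lim_seq_scal_l. apply is_lim_seq_INR.
    simpl. destruct (Rle_dec 0 c); [|lra]. destruct (Rle_lt_or_eq_dec 0 c r); [reflexivity|lra].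
Qed.

Lemma poly_ineq (a : R) : 1 <= a ->
  / (3 * a ^ 3 * (a + 1) ^ 3) <= / (1 * a ^ 5) - / (1 * (a + 1) ^ 5).
Proof.
  intros Ha.
  assert (Hp : 0 < a) by lra.
  apply Rminus_le_0.
  replace (/ (1 * a ^ 5) - / (1 * (a + 1) ^ 5) - / (3 * a ^ 3 * (a + 1) ^ 3))
    with ((14*a^4+28*a^3+29*a^2+15*a+3) / (3 * a^5 * (a+1)^5)) by (field; lra).
  apply Rmult_le_pos.
  - assert (0 <= a^2) by nra. assert (0 <= a^3) by nra. assert (0 <= a^4) by nra. lra.
  - left. apply Rinv_0_lt_compat. apply Rmult_lt_0_compat; [|apply pow_lt; lra].
    apply Rmult_lt_0_compat; [lra|apply pow_lt; lra].
Qed.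

Lemma F_bound (t : R) : 1 <= t ->
  / (3 * IZR (Int_part t) ^ 3) - / IZR (Int_part t) ^ 5 <= F t
  <= / (3 * IZR (Int_part t) ^ 3).
Proof.
  intros Ht.
  destruct (base_Int_part t) as [B1 B2].
  set (z := Int_part t) in *.
  assert (Hz : (1 <= z)%Z).
  { assert (0 < IZR z) by lra. apply lt_IZR in H. lia. }
  set (n0 := Z.to_nat z).
  assert (Hn0 : INR n0 = IZR z).
  { unfold n0. rewrite INR_IZR_INZ, Z2Nat.id; [reflexivity|lia]. }
  assert (Hn01 : 1 <= INR n0) by (rewrite Hn0; apply IZR_le; lia).
  set (h := fun n : nat => / (3 * INR n ^ 3)).
  set (b := fun n : nat => if le_dec n0 n then h n - h (S n) else 0).
  set (c := fun n : nat => if le_dec n0 n then / (3 * INR n ^ 3 * (INR n + 1) ^ 3) else 0).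
  set (e := fun n : nat => if le_dec n0 n then
              / (1 * INR n ^ 5) - / (1 * INR (S n) ^ 5) else 0).
  assert (Hb : is_series b (h n0)) by (apply tele_series, lim_invpow; lia || lra).
  assert (He : is_series e (/ (1 * INR n0 ^ 5))).
  { apply (tele_series (fun n => / (1 * INR n ^ 5))), lim_invpow; lia || lra. }
  assert (Hce : forall n, 0 <= c n <= e n).
  { intros n. unfold c, e. destruct (le_dec n0 n) as [Hl|Hl]; [|lra].
    assert (1 <= INR n) by (apply Rle_trans with (INR n0); [lra|apply le_INR; lia]).
    split.
    - left. apply Rinv_0_lt_compat. apply Rmult_lt_0_compat; [|apply pow_lt; lra].
      apply Rmult_lt_0_compat; [lra|apply pow_lt; lra].
    - rewrite S_INR. apply poly_ineq. lra. }
  assert (Hexe : ex_series e) by (exists (/ (1 * INR n0 ^ 5)); exact He).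
  assert (Hexc : ex_series c).
  { apply (ex_series_le c e); [|exact Hexe]. intros n.
    change (norm (c n)) with (Rabs (c n)). rewrite Rabs_pos_eq; apply Hce. }
  assert (Hexb : ex_series b) by (exists (h n0); exact Hb).
  assert (HF : F t = Series b - Series c).
  { rewrite <- Series_minus by assumption. unfold F. apply Series_ext.
    intros n. unfold b, c, h. destruct (le_dec n0 n) as [Hl|Hl].
    - assert (Hle : INR n0 <= INR n) by (apply le_INR; lia).
      destruct (Rlt_dec 0 (INR n)); [|lra].
      destruct (Rlt_dec (t - 1) (INR n)); [|lra].
      rewrite S_INR. field. lra.
    - assert (Hle : INR n + 1 <= INR n0) by (rewrite <- S_INR; apply le_INR; lia).
      destruct (Rlt_dec 0 (INR n)); [|lra].
      destruct (Rlt_dec (t - 1) (INR n)); [lra|lra]. }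
  rewrite (is_series_unique b (h n0) Hb) in HF.
  assert (Hc1 : Series c <= / (1 * INR n0 ^ 5)).
  { rewrite <- (is_series_unique e _ He). apply Series_le; assumption. }
  assert (Hc0 : 0 <= Series c).
  { assert (Z0 : Series (fun n => c n - c n) = 0).
    { rewrite Series_minus by assumption. ring. }
    rewrite <- Z0.
    apply Series_le; [|exact Hexc]. intros n. specialize (Hce n). lra. }
  rewrite HF. unfold h. rewrite Hn0 in *. rewrite Rmult_1_l in Hc1. lra.
Qed.

Lemma term_bound (d m x t k : R) :
  d = m + 1 -> 1 <= m -> 0 < x -> 2 * m <= x -> 0 <= t -> t * (t - m) = m * x ->
  t - m < k -> k <= t ->
  Rabs (d ^ 2 * IZR (Int_part (x / k)) + 2 * d * x / IZR (Int_part (x / k))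
        - x ^ 2 * F (x / k)
        - (8 * d ^ 2 - 4 * d - 1) / 3 * sqrt (m * x) / m)
  <= 2 + 411 * m ^ 2 / (sqrt (m * x) / m).
Proof.
  intros Hd Hm Hx Hxm Ht Htt Hk1 Hk2.
  assert (Ht2 : 2 * m <= t) by nra.
  assert (Hk : 0 < k) by lra.
  set (z := x / k).
  assert (Hzk : z * k = x) by (unfold z; field; lra).
  assert (Hz1 : t - m <= m * z).
  { assert (E1 : (m * z - (t - m)) * k = (t - k) * (t - m)) by nra.
    assert (0 <= (t - k) * (t - m)) by (apply Rmult_le_pos; lra).
    destruct (Rle_or_lt (t - m) (m * z)); [assumption|]. nra. }
  assert (Hz2 : m * z < t).
  { assert (E1 : (t - m * z) * k = t * (k - (t - m))) by nra.
    assert (0 < t * (k - (t - m))) by (apply Rmult_lt_0_compat; lra).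
    destruct (Rle_or_lt t (m * z)); [|assumption]. nra. }
  assert (Hz : 1 <= z) by (destruct (Rle_or_lt 1 z); [assumption|nra]).
  destruct (base_Int_part z) as [B1 B2].
  set (q := IZR (Int_part z)) in *.
  assert (Hq1 : 1 <= q).
  { assert (0 < q) by lra. unfold q in *. apply lt_IZR in H. apply IZR_le. lia. }
  set (y := sqrt (m * x)).
  assert (Hy2 : y * y = m * x) by (apply sqrt_sqrt; nra).
  assert (Hy0 : 0 <= y) by apply sqrt_pos.
  set (q0 := y / m).
  assert (Hq0x : x = m * q0 ^ 2) by (unfold q0; replace (m * (y/m)^2) with (y*y/m) by (field; lra);
      rewrite Hy2; field; lra).
  assert (Hq0p : 0 <= q0) by (unfold q0; apply Rdiv_le_0_compat; lra).
  assert (Hmq0a : m * q0 <= t) by nra.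
  assert (Hmq0b : t - m <= m * q0) by nra.
  assert (Hq01 : 1 <= q0) by nra.
  assert (Hdiff1 : q0 - q < 2) by nra.
  assert (Hdiff2 : q - q0 < 1) by nra.
  assert (Hq03 : q0 < 3 * q) by nra.
  destruct (F_bound z Hz) as [F1 F2]. fold q in F1, F2.
  set (w := / q0). set (v := / q).
  assert (Hw : 0 < w <= 1).
  { unfold w. split; [apply Rinv_0_lt_compat; lra|]. rewrite <- Rinv_1. apply Rinv_le_contravar; lra. }
  assert (Hv : 0 < v) by (unfold v; apply Rinv_0_lt_compat; lra).
  assert (Hvw : v <= 3 * w).
  { unfold v, w. apply Rmult_le_reg_r with (q * q0); [nra|].
    field_simplify; lra. }
  assert (Hq0w : q0 * w = 1) by (unfold w; field; lra).
  assert (Hqv : q * v = 1) by (unfold v; field; lra).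
  set (s := q0 * v - 1).
  set (B := 1 - 2 * m * s + m ^ 2 * s ^ 2 * (4 + s) / 3).
  set (G := F z).
  assert (HE : d ^ 2 * q + 2 * d * x / q - x ^ 2 * G
               - (8 * d ^ 2 - 4 * d - 1) / 3 * y / m
               = (q - q0) * B + x ^ 2 * (/ (3 * q ^ 3) - G)).
  { assert (Hy : y = m * q0) by (unfold q0; field; lra).
    rewrite Hy. unfold B, s, v. rewrite Hd, Hq0x. field. split; lra. }
  fold q0. rewrite HE.
  assert (Hs : s = (q0 - q) * v) by (unfold s; rewrite Rmult_minus_distr_r, Hqv; ring).
  assert (Hsa : Rabs s <= 6 * w).
  { rewrite Hs, Rabs_mult, (Rabs_pos_eq v) by lra.
    assert (Rabs (q0 - q) <= 2) by (apply Rabs_le; lra). nra. }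
  assert (Hs2 : s < 2).
  { unfold s. assert (q0 * v < 3 * q * v) by (apply Rmult_lt_compat_r; lra). lra. }
  assert (Hs3 : -1 < s) by (unfold s; assert (0 < q0 * v) by (apply Rmult_lt_0_compat; lra); lra).
  assert (HB : Rabs B <= 1 + 12 * m * w + 72 * m ^ 2 * w ^ 2).
  { unfold B.
    assert (Hsq : s ^ 2 <= 36 * w ^ 2).
    { rewrite <- (pow2_abs s). replace (36 * w ^ 2) with ((6 * w) ^ 2) by ring. apply pow_incr. split; [apply Rabs_pos|lra]. }
    assert (T1 : Rabs (2 * m * s) <= 12 * m * w).
    { rewrite Rabs_mult, (Rabs_pos_eq (2*m)) by lra. nra. }
    assert (T2 : 0 <= m ^ 2 * s ^ 2 * (4 + s) / 3 <= 72 * m ^ 2 * w ^ 2).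
    { assert (0 <= m^2) by nra. assert (0 <= s^2) by nra.
      assert (0 <= m^2 * s^2) by nra. split; [|nra].
      apply Rmult_le_pos; [|lra]. apply Rmult_le_pos; lra. }
    unfold Rminus. eapply Rle_trans; [apply Rabs_triang|].
    rewrite (Rabs_pos_eq (m ^ 2 * s ^ 2 * (4 + s) / 3)) by lra.
    eapply Rle_trans; [apply Rplus_le_compat_r; apply Rabs_triang|].
    rewrite Rabs_R1, Rabs_Ropp. lra. }
  assert (HG : 0 <= / (3 * q ^ 3) - G <= v ^ 5).
  { unfold v. rewrite pow_inv. unfold G. lra. }
  assert (Hx2 : x ^ 2 * v ^ 5 <= 243 * m ^ 2 * w).
  { assert (v ^ 5 <= (3 * w) ^ 5) by (apply pow_incr; lra).
    assert (0 <= x ^ 2) by nra.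
    apply Rle_trans with (x ^ 2 * (3 * w) ^ 5); [apply Rmult_le_compat_l; lra|].
    rewrite Hq0x. replace ((m * q0 ^ 2) ^ 2 * (3 * w) ^ 5) with (243 * m ^ 2 * w * (q0 * w) ^ 4) by ring.
    rewrite Hq0w. lra. }
  assert (Hfin : Rabs ((q - q0) * B + x ^ 2 * (/ (3 * q ^ 3) - G)) <= 2 + 411 * m ^ 2 * w).
  { eapply Rle_trans; [apply Rabs_triang|].
    rewrite Rabs_mult, (Rabs_pos_eq (x ^ 2 * _)) by (apply Rmult_le_pos; [nra|lra]).
    assert (Rabs (q - q0) <= 2) by (apply Rabs_le; lra).
    assert (Rabs (q - q0) * Rabs B <= 2 * (1 + 12 * m * w + 72 * m ^ 2 * w ^ 2)).
    { apply Rmult_le_compat; try apply Rabs_pos; lra. }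
    assert (x ^ 2 * (/ (3 * q ^ 3) - G) <= x ^ 2 * v ^ 5)
      by (apply Rmult_le_compat_l; [nra|lra]).
    assert (m <= m ^ 2) by nra. assert (w ^ 2 <= w) by nra.
    assert (m * w <= m ^ 2 * w) by nra. assert (m ^ 2 * w ^ 2 <= m ^ 2 * w) by nra.
    lra. }
  replace (411 * m ^ 2 / q0) with (411 * m ^ 2 * w) by (unfold w; field; lra).
  exact Hfin.
Qed.

Lemma fold_bound (f : nat -> R) (c B : R) (n : nat) : forall s : nat,
  (forall j, (s <= j < s + n)%nat -> Rabs (f j - c) <= B) ->
  Rabs (fold_right Rplus 0 (map f (seq s n)) - INR n * c) <= INR n * B.
Proof.
  induction n as [|n IH]; intros s Hs.
  - simpl. rewrite Rmult_0_l, Rminus_0_r, Rabs_R0. lra.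
  - simpl seq. simpl map. simpl fold_right. rewrite S_INR.
    replace (f s + fold_right Rplus 0 (map f (seq (S s) n)) - (INR n + 1) * c)
      with ((f s - c) + (fold_right Rplus 0 (map f (seq (S s) n)) - INR n * c)) by ring.
    eapply Rle_trans; [apply Rabs_triang|].
    assert (H1 : Rabs (f s - c) <= B) by (apply Hs; lia).
    assert (H2 : Rabs (fold_right Rplus 0 (map f (seq (S s) n)) - INR n * c) <= INR n * B).
    { apply IH. intros j Hj. apply Hs. lia. }
    lra.
Qed.

Theorem proposition9 :
  exists C : R, forall (d : Z) (x : R),
    0 < x -> 0 <= IZR d - 1 <= x / 2 ->
    Rabs (Ssum d x
          - (8 * IZR d ^ 2 - 4 * IZR d - 1) / 3 * sqrt ((IZR d - 1) * x))
      <= C * (IZR d ^ 3 * sqrt (IZR d) / sqrt x + IZR d ^ 2).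
Proof.
  exists 411. intros d x Hx [Hd1 Hd2].
  assert (Hsx : 0 < sqrt x) by (apply sqrt_lt_R0; lra).
  assert (Hdz : (1 <= d)%Z) by (apply le_IZR; lra).
  assert (HR : 0 <= IZR d ^ 3 * sqrt (IZR d) / sqrt x + IZR d ^ 2).
  { assert (1 <= IZR d) by lra.
    assert (0 <= IZR d ^ 3) by (apply pow_le; lra).
    assert (0 <= sqrt (IZR d)) by apply sqrt_pos.
    assert (0 <= IZR d ^ 3 * sqrt (IZR d) / sqrt x).
    { apply Rdiv_le_0_compat; [apply Rmult_le_pos|]; lra. }
    nra. }
  destruct (Z.eq_dec d 1) as [->|Hd2'].
  - unfold Ssum, zsum.
    replace (Kd (1 - 1) x - (Kd (1 - 1) x - 1 + 1))%Z with 0%Z by ring.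
    simpl. replace ((1 - 1) * x) with 0 by ring. rewrite sqrt_0.
    rewrite Rmult_0_r, Rminus_0_r, Rabs_R0. nra.
  - assert (Hd : (2 <= d)%Z) by lia.
    set (m := IZR d - 1).
    assert (Hm : 1 <= m) by (unfold m; apply IZR_le in Hd; lra).
    assert (Hmz : IZR (d - 1) = m) by (unfold m; rewrite minus_IZR; reflexivity).
    set (sq := sqrt (m ^ 2 + 4 * m * x)).
    assert (Hsq : sq * sq = m ^ 2 + 4 * m * x) by (apply sqrt_sqrt; nra).
    assert (Hsq0 : 0 <= sq) by apply sqrt_pos.
    set (t := (m + sq) / 2).
    assert (Ht0 : 0 <= t) by (unfold t; lra).
    assert (Htt : t * (t - m) = m * x) by (unfold t; nra).
    set (Kz := Kd (d - 1) x).
    assert (HK : Kz = Int_part t).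
    { unfold Kz, Kd, ifloor. rewrite Hmz. reflexivity. }
    destruct (base_Int_part t) as [B1 B2]. rewrite <- HK in B1, B2.
    set (c := (8 * IZR d ^ 2 - 4 * IZR d - 1) / 3 * sqrt (m * x) / m).
    set (Bd := 2 + 411 * m ^ 2 / (sqrt (m * x) / m)).
    assert (Hn : INR (Z.to_nat (Kz - (Kz - d + 1))) = m).
    { replace (Kz - (Kz - d + 1))%Z with (d - 1)%Z by ring.
      rewrite INR_IZR_INZ, Z2Nat.id by lia. exact Hmz. }
    assert (Hfold := fold_bound (fun j : nat => summand d x (Kz - d + 1 + 1 + Z.of_nat j))
                       c Bd (Z.to_nat (Kz - (Kz - d + 1))) 0).
    unfold Ssum, zsum. fold Kz. rewrite Hn in Hfold.
    assert (Htarget : (8 * IZR d ^ 2 - 4 * IZR d - 1) / 3 * sqrt (m * x) = m * c).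
    { unfold c, m. field. unfold m in Hm. lra. }
    rewrite Htarget.
    eapply Rle_trans; [apply Hfold|].
    + intros j [_ Hj]. simpl in Hj.
      assert (Hj' : (Z.of_nat j < d - 1)%Z).
      { assert (Z.of_nat j < Z.of_nat (Z.to_nat (Kz - (Kz - d + 1))))%Z by lia.
        rewrite Z2Nat.id in H by lia. lia. }
      set (kz := (Kz - d + 1 + 1 + Z.of_nat j)%Z).
      assert (Hk1 : (kz <= Kz)%Z) by (unfold kz; lia).
      assert (Hk2 : (Kz - d + 2 <= kz)%Z) by (unfold kz; lia).
      apply IZR_le in Hk1. apply IZR_le in Hk2.
      rewrite plus_IZR, minus_IZR in Hk2.
      unfold summand, ifloor. cbv zeta.
      apply (term_bound (IZR d) m x t (IZR kz)); unfold m in *; try lra.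
    + unfold Bd. rewrite sqrt_mult by lra.
      set (sm := sqrt m). set (sx := sqrt x).
      assert (Hsx' : 0 < sx) by (unfold sx; apply sqrt_lt_R0; lra).
      assert (Hsm : sm * sm = m) by (apply sqrt_sqrt; lra).
      assert (Hsm0 : 0 < sm) by (apply sqrt_lt_R0; lra).
      replace (m * (2 + 411 * m ^ 2 / (sm * sx / m))) with (2 * m + 411 * (m ^ 3 * sm / sx)).
      2:{ assert (0 < sx) by (unfold sx; apply sqrt_lt_R0; lra).
          rewrite <- Hsm. field. split; lra. }
      assert (HdR : m + 1 = IZR d) by (unfold m; ring).
      assert (Hmono : m ^ 3 * sm <= IZR d ^ 3 * sqrt (IZR d)).
      { apply Rmult_le_compat.
        - apply pow_le; lra.
        - lra.
        - apply pow_incr; lra.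
        - apply sqrt_le_1_alt. lra. }
      assert (m ^ 3 * sm / sx <= IZR d ^ 3 * sqrt (IZR d) / sx).
      { unfold Rdiv. apply Rmult_le_compat_r; [left; apply Rinv_0_lt_compat; lra|lra]. }
      assert (2 * m <= 411 * IZR d ^ 2) by nra.
      unfold sx in *. lra.
Qed.
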